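(* Under the setting of the context, let $\mathbf e=e_1+\dots+e_d$. There exists a constant $C$, depending only on $E$, $P$ and $p$, such that for all $m\ge1$ and all integers $1\le n\le p\le q$, $$|R_q-R_n|^2+2\sum_{k=p}^{q-1}\langle m\mathbf e-R_n,(h-g)^-(\xi_k,R_k/m)\rangle+2\sum_{k=p}^{q-1}\langle R_n,(h-g)^+(\xi_k,R_k/m)\rangle\le|R_p-R_n|^2+C(q-p+m)+2\sum_{k=p}^{q-1}\langle R_k-R_n,Z_{k+1}\rangle.$$
   Context: Let $d\ge1$, $(e_1,\dots,e_d)$ the canonical basis, $\mathcal V=\{\pm e_1,\dots,\pm e_d\}$. Let $E$ be a finite set and $P$ an irreducible and aperiodic stochastic matrix on $E$ with unique invariant probability $\mu$. For $k\in E$, $y\in\mathbb R^d$, $p(k,y,\cdot)$ is a probability on $\mathcal V$, with $y\mapsto p(k,y,u)$ twice continuously differentiable with bounded derivatives. Let $g(k,y)=\sum_uu\,p(k,y,u)$, assumed to satisfy $\sum_k\mu(k)g(k,y)=0$ for all $y$, and $v(i,y)=\sum_{n\ge0}\sum_jP^n(i,j)g(j,y)$. Reflected kernel: for $k\in E$, $y\in[0,1]^d$, $\ell\le d$: if $0<y_\ell<1$, $q(k,y,\pm e_\ell)=p(k,y,\pm e_\ell)$; if $y_\ell=1$, $q(k,y,e_\ell)=0$, $q(k,y,-e_\ell)=p(k,y,e_\ell)+p(k,y,-e_\ell)$; if $y_\ell=0$, $q(k,y,-e_\ell)=0$, $q(k,y,e_\ell)=p(k,y,e_\ell)+p(k,y,-e_\ell)$;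 $h(k,y)=\sum_uu\,q(k,y,u)$; $c^{(m)}(i,y)=\sum_uq(i,y,u)[(v-g)(i,y+u/m)-(v-g)(i,y)]$. For $m\ge1$, $(\xi_n,R_n)_{n\ge0}$ is a Markov chain on $E\times\{0,\dots,m\}^d$ with $R_0=0$ and $\mathbb P(\xi_{n+1}=k,R_{n+1}=R_n+u\mid\xi_0,\dots,\xi_n,R_0,\dots,R_n)=P(\xi_n,k)q(\xi_n,R_n/m,u)$. $Z_{n+1}=R_{n+1}+v(\xi_{n+1},R_{n+1}/m)-[R_n+v(\xi_n,R_n/m)+(h-g)(\xi_n,R_n/m)+c^{(m)}(\xi_n,R_n/m)]$. For a vector $w$, $w^+$ and $w^-$ denote the coordinatewise positive and negative parts (so $w=w^+-w^-$, both with nonnegative entries). *)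

(* Defs.v *)
From HB Require Import structures.
From mathcomp Require Import all_boot all_order all_algebra.
From mathcomp Require Import all_classical all_reals all_analysis.
Set Implicit Arguments. Unset Strict Implicit. Unset Printing Implicit Defensive.
Import Order.TTheory GRing.Theory Num.Theory.
Import numFieldNormedType.Exports.
Local Open Scope ring_scope.

Section Defs.
Variables (R : realType) (d : nat) (E : finType).

Definition ebasis (l : 'I_d) : 'rV[R]_d := delta_mx 0 l.

(* the set V = {+-e_1,...,+-e_d}: a direction (l, true) is +e_l, (l, false) is -e_l *)
Definition dir := ('I_d * bool)%type.
Definition dvec (u : dir) : 'rV[R]_d :=
  if u.2 then ebasis u.1 else - ebasis u.1.

Definition eall : 'rV[R]_d := \sum_(l < d) ebasis l.

Definition dotv (a b : 'rV[R]_d) : R := \sum_(l < d) a 0 l * b 0 l.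
Definition sqnorm (a : 'rV[R]_d) : R := dotv a a.

Definition pospart (w : 'rV[R]_d) : 'rV[R]_d := \row_l Num.max (w 0 l) 0.
Definition negpart (w : 'rV[R]_d) : 'rV[R]_d := \row_l Num.max (- w 0 l) 0.

Fixpoint Ppow (P : E -> E -> R) (n : nat) : E -> E -> R :=
  match n with
  | 0 => fun i j => if i == j then 1 else 0
  | n'.+1 => fun i j => \sum_(k : E) Ppow P n' i k * P k j
  end.

Definition stochastic (P : E -> E -> R) :=
  (forall i j, 0 <= P i j) /\ (forall i, \sum_(j : E) P i j = 1).

Definition irreducible (P : E -> E -> R) :=
  forall i j, exists n, 0 < Ppow P n i j.

Definition aperiodic (P : E -> E -> R) :=
  forall i, forall q : nat,
    (forall n, (0 < n)%N -> 0 < Ppow P n i i -> (q %| n)%N) -> q = 1%N.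

Definition invariant_prob (P : E -> E -> R) (mu : E -> R) :=
  (forall i, 0 <= mu i) /\ \sum_(i : E) mu i = 1 /\
  (forall j, \sum_(i : E) mu i * P i j = mu j).

Definition C2_bounded (f : 'rV[R]_d -> R) :=
  (forall i x, derivable f x (ebasis i)) /\
  (forall i j x, derivable ('D_(ebasis i) f) x (ebasis j)) /\
  (forall i, continuous ('D_(ebasis i) f)) /\
  (forall i j, continuous ('D_(ebasis j) ('D_(ebasis i) f))) /\
  (exists M : R, forall i j x,
      `|'D_(ebasis i) f x| <= M /\ `|'D_(ebasis j) ('D_(ebasis i) f) x| <= M).

Definition kernel_ok (p : E -> 'rV[R]_d -> dir -> R) :=
  (forall k y u, 0 <= p k y u) /\ (forall k y, \sum_(u : dir) p k y u = 1).

Variable p : E -> 'rV[R]_d -> dir -> R.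

Definition gdrift (k : E) (y : 'rV[R]_d) : 'rV[R]_d :=
  \sum_(u : dir) p k y u *: dvec u.

Definition vcorr (P : E -> E -> R) (i : E) (y : 'rV[R]_d) : 'rV[R]_d :=
  limn (fun N => \sum_(0 <= n < N) \sum_(j : E) Ppow P n i j *: gdrift j y).

Definition qrefl (k : E) (y : 'rV[R]_d) (u : dir) : R :=
  let l := u.1 in
  if y 0 l == 1 then
    (if u.2 then 0 else p k y (l, true) + p k y (l, false))
  else if y 0 l == 0 then
    (if u.2 then p k y (l, true) + p k y (l, false) else 0)
  else p k y u.

Definition hdrift (k : E) (y : 'rV[R]_d) : 'rV[R]_d :=
  \sum_(u : dir) qrefl k y u *: dvec u.

Definition cm (P : E -> E -> R) (m : nat) (i : E) (y : 'rV[R]_d) : 'rV[R]_d :=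
  \sum_(u : dir) qrefl i y u *:
    ((vcorr P i (y + (m%:R)^-1 *: dvec u) - gdrift i (y + (m%:R)^-1 *: dvec u))
     - (vcorr P i y - gdrift i y)).

(* admissible trajectory of the chain (xi_n, R_n): R_0 = 0 and every
   transition has positive probability P(xi_n,xi_{n+1}) q(xi_n,R_n/m,u) *)
Definition admissible (P : E -> E -> R) (m : nat)
    (xi : nat -> E) (Rw : nat -> 'rV[R]_d) :=
  Rw 0%N = 0 /\
  forall n, exists u : dir,
    Rw n.+1 = Rw n + dvec u /\
    0 < P (xi n) (xi n.+1) * qrefl (xi n) ((m%:R)^-1 *: Rw n) u.

Definition Zinc (P : E -> E -> R) (m : nat)
    (xi : nat -> E) (Rw : nat -> 'rV[R]_d) (n : nat) : 'rV[R]_d :=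
  let y := (m%:R)^-1 *: Rw n in
  Rw n.+1 + vcorr P (xi n.+1) ((m%:R)^-1 *: Rw n.+1)
  - (Rw n + vcorr P (xi n) y + (hdrift (xi n) y - gdrift (xi n) y)
     + cm P m (xi n) y).

End Defs.

(* Main.v *)
Require Import Defs.
From HB Require Import structures.
From mathcomp Require Import all_boot all_order all_algebra.
From mathcomp Require Import all_classical all_reals all_analysis.
From mathcomp Require Import zify ring lra.
Set Implicit Arguments. Unset Strict Implicit. Unset Printing Implicit Defensive.
Import Order.TTheory GRing.Theory Num.Theory.
Import numFieldNormedType.Exports.
Local Open Scope ring_scope.


Section MarkovA.
Variables (R : realType) (E : finType) (P : E -> E -> R).
Hypothesis Pst : stochastic P.

Lemma Ppow_ge0 n i j : 0 <= Ppow P n i j.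
Proof.
elim: n i j => [|n IH] i j /=; first by case: eqP.
by apply: sumr_ge0 => k _; apply: mulr_ge0 => //; case: Pst.
Qed.

Lemma Ppow_sum1 n i : \sum_j Ppow P n i j = 1.
Proof.
elim: n i => [|n IH] i /=.
  by rewrite (bigD1 i) //= eqxx big1 ?addr0 // => j /negPf; rewrite eq_sym => ->.
rewrite exchange_big /=; rewrite -[RHS](IH i); apply: eq_bigr => k _.
by rewrite -mulr_sumr; case: Pst => _ ->; rewrite mulr1.
Qed.

Lemma Ppow1 i j : Ppow P 1 i j = P i j.
Proof.
rewrite /= (bigD1 i) //= eqxx mul1r big1 ?addr0 // => k /negPf.
by rewrite eq_sym => ->; rewrite mul0r.
Qed.

Lemma PpowD a b i j :
  Ppow P (a + b) i j = \sum_k Ppow P a i k * Ppow P b k j.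
Proof.
elim: b i j => [|b IH] i j.
  rewrite addn0 /= (bigD1 j) //= eqxx mulr1 big1 ?addr0 // => k /negPf.
  by rewrite eq_sym => ->; rewrite mulr0.
rewrite addnS /=.
under eq_bigr => k _ do rewrite IH mulr_suml.
rewrite exchange_big /=; apply: eq_bigr => k _.
by rewrite mulr_sumr; apply: eq_bigr => l _; rewrite mulrA.
Qed.

Lemma Ppow_mul_le a b i k j :
  Ppow P a i k * Ppow P b k j <= Ppow P (a + b) i j.
Proof.
rewrite PpowD (bigD1 k) //= lerDl; apply: sumr_ge0 => l _.
by apply: mulr_ge0; apply: Ppow_ge0.
Qed.

Lemma Ppow_pos_add a b i k j :
  0 < Ppow P a i k -> 0 < Ppow P b k j -> 0 < Ppow P (a + b) i j.
Proof.
move=> h1 h2; apply: lt_le_trans (Ppow_mul_le a b i k j).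
exact: mulr_gt0.
Qed.

Lemma Ppow_pos_mul a q i : 0 < Ppow P a i i -> 0 < Ppow P (q * a) i i.
Proof.
move=> h; elim: q => [|q IH]; first by rewrite mul0n /= eqxx ltr01.
by rewrite mulSn; apply: Ppow_pos_add h IH.
Qed.

Lemma mu_Ppow mu : invariant_prob P mu ->
  forall n j, \sum_i mu i * Ppow P n i j = mu j.
Proof.
case=> _ [_ muinv] n; elim: n => [|n IH] j /=.
  rewrite (bigD1 j) //= eqxx mulr1 big1 ?addr0 // => k /negPf ->.
  by rewrite mulr0.
under eq_bigr => i _ do rewrite mulr_sumr.
rewrite exchange_big /= -[RHS]muinv; apply: eq_bigr => k _.
by rewrite -IH mulr_suml; apply: eq_bigr => i _; rewrite mulrA.
Qed.

Hypothesis Pirr : irreducible P.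
Hypothesis Pap : aperiodic P.

Lemma return_pos i : exists s, (0 < s)%N /\ 0 < Ppow P s i i.
Proof.
have [j Pij] : exists j, 0 < P i j.
  apply/not_existsP => H.
  have : \sum_j P i j = 0.
    apply: big1 => j _; apply/eqP; rewrite eq_le; case: Pst => -> _.
    by rewrite andbT leNgt; apply/negP => /(H j).
  by case: Pst => _ ->; move/eqP; rewrite oner_eq0.
have [n Hn] := Pirr j i.
exists (1 + n)%N; split => //; apply: (Ppow_pos_add (k:=j)) => //.
by rewrite Ppow1.
Qed.

Lemma eventually_pos i : exists N0, forall n, (N0 <= n)%N -> 0 < Ppow P n i i.
Proof.
pose S n := 0 < Ppow P n i i.
have S0 : S 0%N by rewrite /S /= eqxx ltr01.
have Sadd a b : S a -> S b -> S (a + b)%N by move=> ha hb; exact: Ppow_pos_add ha hb.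
have Smul q a : S a -> S (q * a)%N by exact: Ppow_pos_mul.
pose D k := exists x y, [/\ S x, S y & x = (y + k)%N].
pose pr := fun k => (0 < k)%N && `[< D k >].
have exP : exists k, pr k.
  have [s [s0 Ss]] := return_pos i.
  exists s; rewrite /pr s0 /=; apply/asboolP; exists s, 0%N; split => //.
have [d0 /andP[d0pos /asboolP [x [y [Sx Sy xyd]]]] d0min] := ex_minnP exP.
have dvd s : (0 < s)%N -> S s -> (d0 %| s)%N.
  move=> _ Ss; apply/dvdnP; exists (s %/ d0)%N.
  have [r0|rpos] := posnP (s %% d0)%N.
    by rewrite {1}(divn_eq s d0) r0 addn0.
  have : (d0 <= s %% d0)%N.
    apply: d0min; rewrite /pr rpos /=; apply/asboolP.
    exists (s + (s %/ d0) * y)%N, ((s %/ d0) * x)%N; split.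
    - by apply: Sadd => //; apply: Smul.
    - by apply: Smul.
    - rewrite xyd {1}(divn_eq s d0) mulnDr; lia.
  by rewrite leqNgt ltn_pmod.
have d01 : d0 = 1%N.
  exact: (Pap (fun n npos Sn => dvd n npos Sn)).
move: xyd; rewrite d01 => xy1.
have [y0|ypos] := posnP y.
  exists 0%N => n _; rewrite -[n]muln1; apply: Smul.
  by move: Sx; rewrite xy1 y0.
exists (y * y)%N => n hn.
have -> : n = ((n %/ y - n %% y) * y + (n %% y) * x)%N.
  have hr : (n %% y < y)%N by rewrite ltn_pmod.
  have hk : (y <= n %/ y)%N by rewrite leq_divRL.
  rewrite xy1 mulnBl mulnDr muln1 {1}(divn_eq n y).
  have : (n %% y * y <= n %/ y * y)%N by rewrite leq_mul2r ltnW ?orbT // (leq_trans _ hk) // ltnW.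
  lia.
by apply: Sadd; apply: Smul.
Qed.

Lemma uniform_pos : exists N, forall i j, 0 < Ppow P N i j.
Proof.
have [Nf HN] := choice eventually_pos.
have [nf Hn] : exists nf : E -> E -> nat, forall i j, 0 < Ppow P (nf i j) i j.
  have [g Hg] := choice (fun ij : E * E => Pirr ij.1 ij.2).
  by exists (fun i j => g (i, j)) => i j; apply: (Hg (i, j)).
pose N0 := (\max_i Nf i)%N.
pose M := (\max_(ij : E * E) nf ij.1 ij.2)%N.
exists (N0 + M)%N => i j.
have hM : (nf i j <= M)%N by rewrite /M (leq_bigmax (i, j)).
have -> : (N0 + M = (N0 + M - nf i j) + nf i j)%N by rewrite subnK //; lia.
apply: (Ppow_pos_add (k:=i)) => //; apply: HN.
rewrite (leq_trans (leq_bigmax i)) // /N0; lia.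
Qed.

End MarkovA.


Section Contract.
Variables (R : realType) (E : finType).

Lemma contractQ (Q : E -> E -> R) (dl o : R) (x : E -> R) i i' :
  0 <= dl -> (forall a b, dl <= Q a b) -> (forall a, \sum_b Q a b = 1) ->
  (forall k k', x k - x k' <= o) ->
  \sum_k Q i k * x k - \sum_k Q i' k * x k <= (1 - #|E|%:R * dl) * o.
Proof.
move=> dl0 Qdl Q1 xo.
pose c k := Q i k - dl; pose c' k := Q i' k - dl.
have c0 k : 0 <= c k by rewrite subr_ge0.
have c'0 k : 0 <= c' k by rewrite subr_ge0.
have sc : \sum_k c k = 1 - #|E|%:R * dl.
  by rewrite /c /c' sumrB Q1 sumr_const mulr_natl.
have sc' : \sum_k c' k = 1 - #|E|%:R * dl.
  by rewrite /c /c' sumrB Q1 sumr_const mulr_natl.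
set rho := 1 - _ * _ in sc sc' *.
have -> : \sum_k Q i k * x k - \sum_k Q i' k * x k =
          \sum_k c k * x k - \sum_k c' k * x k.
  rewrite /c /c'; under [in RHS]eq_bigr => k _ do rewrite mulrBl.
  under [X in _ = _ - X]eq_bigr => k _ do rewrite mulrBl.
  rewrite !sumrB; lra.
have eq1 : \sum_k \sum_k' c k * c' k' * (x k - x k') =
     (\sum_k c k * x k) * (\sum_k c' k) - (\sum_k c k) * (\sum_k c' k * x k).
  rewrite mulr_suml [X in _ = _ - X]mulr_suml -sumrB; apply: eq_bigr => k _.
  rewrite !mulr_sumr -sumrB; apply: eq_bigr => k' _; ring.
have eq2 : \sum_k \sum_k' c k * c' k' * o = (\sum_k c k) * (\sum_k c' k) * o.
  rewrite !mulr_suml; apply: eq_bigr => k _; rewrite mulr_sumr mulr_suml.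
  by apply: eq_bigr => k' _; ring.
have key : rho * (\sum_k c k * x k - \sum_k c' k * x k) <= rho * (rho * o).
  have -> : rho * (\sum_k c k * x k - \sum_k c' k * x k) =
    \sum_k \sum_k' c k * c' k' * (x k - x k') by rewrite eq1 sc sc'; ring.
  have -> : rho * (rho * o) = \sum_k \sum_k' c k * c' k' * o by rewrite eq2 sc sc'; ring.
  apply: ler_sum => k _; apply: ler_sum => k' _.
  by apply: ler_wpM2l; [apply: mulr_ge0|apply: xo].
have [rho0|rhopos] := eqVneq rho 0.
  have hc k : c k = 0.
    by apply/eqP; move: (sc); rewrite rho0 => /eqP; rewrite psumr_eq0 // => /allP; apply; rewrite mem_index_enum.
  have hc' k : c' k = 0.
    by apply/eqP; move: (sc'); rewrite rho0 => /eqP; rewrite psumr_eq0 // => /allP; apply; rewrite mem_index_enum.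
  rewrite rho0 mul0r big1 ?big1 ?subr0 // => k _; by rewrite ?hc ?hc' mul0r.
have rgt0 : 0 < rho by rewrite lt_def rhopos /= -sc sumr_ge0.
by rewrite -(ler_pM2l rgt0).
Qed.

Lemma Tbound (o : nat -> R) (rho : R) (N : nat) :
  (forall n, 0 <= o n) -> (forall n, o n <= 1) ->
  (forall n, o (N + n)%N <= rho * o n) -> 0 <= rho -> rho < 1 ->
  forall M, \sum_(0 <= n < M) o n <= N%:R / (1 - rho).
Proof.
move=> o0 o1 oN r0 r1 M.
have T0 K : 0 <= \sum_(0 <= n < K) o n by apply: sumr_ge0 => n _; exact: o0.
have Tmon K : \sum_(0 <= n < M) o n <= \sum_(0 <= n < M + K) o n.
  rewrite [X in _ <= X](big_cat_nat (n:=M)) //= ?leq_addr // lerDl; apply: sumr_ge0 => n _; exact: o0.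
have split : \sum_(0 <= n < N + M) o n =
   \sum_(0 <= n < N) o n + \sum_(0 <= n < M) o (N + n)%N.
  rewrite (big_cat_nat (n:=N)) //= ?leq_addr //; congr (_ + _).
  rewrite -{1}[N]add0n big_addn addKn; apply: eq_bigr => n _; by rewrite addnC.
have h1 : \sum_(0 <= n < N) o n <= N%:R.
  apply: le_trans (_ : \sum_(0 <= n < N) (1 : R) <= _).
    by apply: ler_sum => n _.
  by rewrite sumr_const_nat subn0.
have h2 : \sum_(0 <= n < M) o (N + n)%N <= rho * \sum_(0 <= n < N + M) o n.
  apply: le_trans (_ : rho * \sum_(0 <= n < M) o n <= _).
    by rewrite mulr_sumr; apply: ler_sum => n _.
  by apply: ler_wpM2l => //; rewrite addnC; apply: Tmon.
have r1' : 0 < 1 - rho by rewrite subr_gt0.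
rewrite ler_pdivlMr //.
apply: le_trans (_ : (\sum_(0 <= n < N + M) o n) * (1 - rho) <= _).
  by rewrite ler_pM2r // addnC; exact: Tmon.
rewrite split in h2 *; nra.
Qed.

End Contract.


Section Osc.
Variables (R : realType) (E : finType) (P : E -> E -> R) (mu : E -> R).
Hypothesis Pst : stochastic P.
Hypothesis muinv : invariant_prob P mu.
Variable N : nat.
Hypothesis HN : forall i j, 0 < Ppow P N i j.
Variable i0 : E.

Definition osc n j : R :=
  \big[Num.max/0]_(ii : E * E) (Ppow P n ii.1 j - Ppow P n ii.2 j).
Definition dl : R := \big[Num.min/1]_(ik : E * E) Ppow P N ik.1 ik.2.
Definition rho : R := 1 - #|E|%:R * dl.

Lemma osc_ge n j i i' : Ppow P n i j - Ppow P n i' j <= osc n j.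
Proof.
exact: (le_bigmax 0 (fun ii : E * E => Ppow P n ii.1 j - Ppow P n ii.2 j) (i, i')).
Qed.

Lemma osc_le n j o : 0 <= o -> (forall i i', Ppow P n i j - Ppow P n i' j <= o) ->
  osc n j <= o.
Proof. by move=> o0 H; apply: bigmax_le => // -[i i'] _; apply: H. Qed.

Lemma osc_ge0 n j : 0 <= osc n j.
Proof. by apply: le_trans (osc_ge n j i0 i0); rewrite subrr. Qed.

Lemma dl_gt0 : 0 < dl.
Proof. by apply: lt_bigmin => // -[i k] _; apply: HN. Qed.

Lemma dl_le i k : dl <= Ppow P N i k.
Proof. exact: (bigmin_le 1 (i, k) (fun ik : E * E => Ppow P N ik.1 ik.2)). Qed.

Lemma rho_ge0 : 0 <= rho.
Proof.
rewrite /rho subr_ge0 -[X in _ <= X](Ppow_sum1 Pst N i0).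
apply: le_trans (_ : \sum_(k : E) dl <= _); last by apply: ler_sum => k _; apply: dl_le.
by rewrite sumr_const mulr_natl.
Qed.

Lemma rho_lt1 : rho < 1.
Proof.
rewrite /rho ltrBlDr ltrDl; apply: mulr_gt0; last exact: dl_gt0.
by rewrite ltr0n; apply/card_gt0P; exists i0.
Qed.

Lemma osc_contract (Q : E -> E -> R) (dlt : R) n a j :
  0 <= dlt -> (forall x y, dlt <= Q x y) -> (forall x, \sum_y Q x y = 1) ->
  (forall i, Ppow P (a + n) i j = \sum_k Q i k * Ppow P n k j) ->
  osc (a + n) j <= (1 - #|E|%:R * dlt) * osc n j.
Proof.
move=> d0 Qd Q1 HQ.
have r0 : 0 <= 1 - #|E|%:R * dlt.
  rewrite subr_ge0 -[X in _ <= X](Q1 i0).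
  apply: le_trans (_ : \sum_(k : E) dlt <= _); last by apply: ler_sum => k _; apply: Qd.
  by rewrite sumr_const mulr_natl.
apply: osc_le; first by apply: mulr_ge0 => //; apply: osc_ge0.
move=> i i'; rewrite !HQ; apply: (@contractQ R E Q dlt (osc n j) (fun k => Ppow P n k j)) => //.
by move=> k k'; apply: osc_ge.
Qed.

Lemma osc_step n j : osc (1 + n) j <= osc n j.
Proof.
have := @osc_contract P 0 n 1 j (lexx 0) (fun x y => proj1 Pst x y) (proj2 Pst).
rewrite mulr0 subr0 mul1r; apply => i; rewrite PpowD.
by apply: eq_bigr => k _; rewrite Ppow1.
Qed.

Lemma osc_N n j : osc (N + n) j <= rho * osc n j.
Proof.
apply: (@osc_contract (Ppow P N) dl) => //.
- exact: ltW dl_gt0.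
- exact: dl_le.
- exact: Ppow_sum1.
- by move=> i; rewrite PpowD.
Qed.

Lemma osc_le1 n j : osc n j <= 1.
Proof.
elim: n => [|n IH].
  apply: osc_le => // i i' /=.
  by case: eqP; case: eqP => _ _; rewrite ?subrr ?subr0 ?sub0r ?lerN10 ?ler01 // lerN10.
by apply: le_trans IH; rewrite -add1n; apply: osc_step.
Qed.

Lemma dev_le n i j : `|Ppow P n i j - mu j| <= osc n j.
Proof.
have [mu0 [mu1 _]] := muinv.
have hmu := mu_Ppow muinv n j.
have e1 x : x = \sum_i' mu i' * x by rewrite -mulr_suml mu1 mul1r.
rewrite ler_norml; apply/andP; split.
- rewrite lerNl opprB -hmu [X in _ - X <= _]e1 [X in _ <= X]e1 -sumrB.
  apply: ler_sum => i' _; rewrite -mulrBr; apply: ler_wpM2l => //.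
  exact: osc_ge.
- rewrite -hmu [X in X - _ <= _]e1 [X in _ <= X]e1 -sumrB.
  apply: ler_sum => i' _; rewrite -mulrBr; apply: ler_wpM2l => //; exact: osc_ge.
Qed.

Definition K0 : R := #|E|%:R * (N%:R / (1 - rho)).

Lemma osc_sum j M : \sum_(0 <= n < M) osc n j <= N%:R / (1 - rho).
Proof.
apply: Tbound.
- by move=> n; apply: osc_ge0.
- by move=> n; apply: osc_le1.
- by move=> n; apply: osc_N.
- exact: rho_ge0.
- exact: rho_lt1.
Qed.

Lemma K0_ge0 : 0 <= K0.
Proof.
apply: mulr_ge0 => //; apply: divr_ge0 => //; rewrite subr_ge0; exact: ltW rho_lt1.
Qed.

Section Series.
Variables (f : E -> R) (lam : R) (i : E).
Hypothesis lam0 : 0 <= lam.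
Hypothesis flam : forall j, `|f j| <= lam.
Hypothesis fmean : \sum_j mu j * f j = 0.

Definition term n := \sum_j Ppow P n i j * f j.

Lemma term_bound n : `|term n| <= lam * \sum_j osc n j.
Proof.
have -> : term n = \sum_j (Ppow P n i j - mu j) * f j.
  by rewrite /term; under [RHS]eq_bigr => j _ do rewrite mulrBl; rewrite sumrB fmean subr0.
apply: le_trans (ler_norm_sum _ _ _) _.
rewrite mulr_sumr; apply: ler_sum => j _; rewrite normrM mulrC.
by apply: ler_pM; [exact: normr_ge0|exact: normr_ge0|exact: flam|exact: dev_le].
Qed.

Lemma normed_bound n : [normed series term] n <= lam * K0.
Proof.
rewrite /= /series /=.
apply: le_trans (_ : \sum_(0 <= k < n) (lam * \sum_j osc k j) <= _).
  by apply: ler_sum => k _; apply: term_bound.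
rewrite -mulr_sumr; apply: ler_wpM2l => //.
rewrite exchange_big /= /K0.
apply: le_trans (_ : \sum_(j : E) (N%:R / (1 - rho)) <= _).
  by apply: ler_sum => j _; apply: osc_sum.
rewrite sumr_const [X in _ <= X]mulr_natl le_eqVlt; apply/orP; left; apply/eqP; reflexivity.
Qed.

Lemma normed_cvg_term : cvgn [normed series term].
Proof.
apply: nondecreasing_is_cvgn.
  by apply: nondecreasing_series => k _ _; apply: normr_ge0.
exists (lam * K0) => _ [n _ <-]; exact: normed_bound.
Qed.

Lemma cvg_term : cvgn (series term).
Proof. exact: normed_cvg normed_cvg_term. Qed.

Lemma lim_term_bound : `|limn (series term)| <= lam * K0.
Proof.
apply: le_trans (lim_series_norm normed_cvg_term) _.
apply: limr_le; first exact: normed_cvg_term.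
by apply: nearW => n; apply: normed_bound.
Qed.

End Series.
End Osc.


Section Coord.
Variables (R : realType) (d : nat).

Lemma ebasis_coord (l l' : 'I_d) : ebasis R l 0 l' = (l == l')%:R.
Proof. by rewrite /ebasis mxE eqxx andTb eq_sym. Qed.

Lemma dvec_coord (u : dir d) l :
  dvec R u 0 l = if u.1 == l then (if u.2 then 1 else -1) else 0.
Proof.
rewrite /dvec /ebasis; case: u => l0 [] /=; rewrite !mxE eqxx andTb eq_sym;
  case: eqP => //=; by rewrite oppr0.
Qed.

Lemma sum_dir (F : dir d -> R) :
  \sum_(u : dir d) F u = \sum_(l < d) (F (l, true) + F (l, false)).
Proof.
symmetry.
rewrite (eq_bigr (fun l => \sum_(b : bool) F (l, b))); last first.
  by move=> l _; rewrite big_bool.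
rewrite pair_bigA /=; by apply: eq_bigr => -[l b].
Qed.

Lemma drift_coord (w : dir d -> R) l :
  (\sum_(u : dir d) w u *: dvec R u) 0 l = w (l, true) - w (l, false).
Proof.
rewrite summxE sum_dir (bigD1 l) // big1 ?addr0.
  by rewrite [in LHS]mxE [X in _ + X]mxE !dvec_coord /= eqxx mulr1 mulrN1 addr0.
move=> l' /= /negPf hl; rewrite [in LHS]mxE [X in _ + X]mxE !dvec_coord /= hl; ring.
Qed.

Lemma sum_coord (A : 'rV[R]_d) : A = \sum_(l < d) A 0 l *: ebasis R l.
Proof.
apply/matrixP => i j; rewrite (ord1 i) summxE (bigD1 j) //= big1 ?addr0.
  by rewrite [X in _ = X]mxE ebasis_coord eqxx mulr1.
by move=> l /= /negPf hl; rewrite mxE ebasis_coord hl mulr0.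
Qed.

End Coord.

Section VLim.
Variables (R : realType) (d : nat).
Local Open Scope classical_set_scope.

Lemma limn_coord (S : nat -> 'rV[R]_d) :
  (forall l, cvgn (fun N => S N 0 l)) ->
  forall l, (limn S) 0 l = limn (fun N => S N 0 l).
Proof.
move=> hc l.
have cv0 : (fun N => \sum_(l' < d) S N 0 l' *: ebasis R l') @ \oo -->
     \sum_(l' < d) limn (fun N => S N 0 l') *: ebasis R l'.
  apply: cvg_big => //; first exact: add_continuous.
  by move=> l' _; apply: cvgZr_tmp; exact: (hc l').
have eS : (fun N => \sum_(l' < d) S N 0 l' *: ebasis R l') = S.
  by apply: funext => N; rewrite -sum_coord.
rewrite eS in cv0.
have cv := cv0.
rewrite (cvg_lim _ cv) // summxE (bigD1 l) // big1 ?addr0.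
  by rewrite /= addr0 mxE ebasis_coord eqxx mulr1.
by move=> l' /= /negPf h; rewrite mxE ebasis_coord h mulr0.
Qed.

End VLim.

Section Lip.
Variables (R : realType) (d : nat).
Local Open Scope classical_set_scope.

Lemma aux_lip (x z y : R) : `|x| <= z -> 0 <= y -> `|x * y| <= z * y.
Proof.
move=> h1 h2; rewrite normrM (ger0_norm h2); apply: ler_wpM2r => //.
Qed.

Lemma dir_lip (f : 'rV[R]_d -> R) (M : R) l :
  (forall x, derivable f x (ebasis R l)) ->
  (forall x, `|'D_(ebasis R l) f x| <= M) ->
  forall y t, `|f (y + t *: ebasis R l) - f y| <= M * `|t|.
Proof.
move=> hder hM y t.
pose e := ebasis R l.
pose h := fun s : R => f (y + s *: e).
have hfun s : (fun r : R => r^-1 *: ((h \o shift s) (r *: 1) - h s)) =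
    (fun r => r^-1 *: ((f \o shift (y + s *: e)) (r *: e) - f (y + s *: e))).
  apply: funext => r /=; rewrite /h /shift /=; congr (_ *: (f _ - _)).
  by rewrite [r *: 1]mulr1 scalerDl addrCA addrC.
have hd s : derivable h s 1 by rewrite /derivable hfun; exact: hder.
have hD s : 'D_1 h s = 'D_e f (y + s *: e) by rewrite /derive hfun.
have isd (s : R) : is_derive s (1 : R) h ('D_1 h s) by apply: derivableP; exact: hd.
have cont a b : {within `[a, b], continuous h}.
  by apply: derivable_within_continuous => x _; exact: hd.
have key a b : a <= b -> `|h b - h a| <= M * (b - a).
  move=> ab; have [c _ ->] := MVT_segment ab (fun x _ => isd x) (cont a b).
  have hc := hM (y + c *: e); rewrite -hD in hc.
  have ba : 0 <= b - a by rewrite subr_ge0.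
  exact: (aux_lip hc ba).
have -> : f (y + t *: ebasis R l) - f y = h t - h 0 by rewrite /h scale0r addr0.
have [t0|t0] := leP 0 t.
  by rewrite (ger0_norm t0); have := key 0 t t0; rewrite subr0.
rewrite distrC (ltr0_norm t0); have := key t 0 (ltW t0); rewrite sub0r.
done.
Qed.

End Lip.


Lemma zero_coord (R : realType) d (l : 'I_d) : (0 : 'rV[R]_d) 0 l = 0.
Proof. by rewrite -[0 : 'rV[R]_d]/(const_mx 0) mxE. Qed.

Section Bounds.
Variables (R : realType) (d : nat) (E : finType) (P : E -> E -> R) (mu : E -> R).
Variable p : E -> 'rV[R]_d -> dir d -> R.
Hypothesis Pst : stochastic P.
Hypothesis muinv : invariant_prob P mu.
Hypothesis pk : kernel_ok p.
Hypothesis gmean : forall y, \sum_(k : E) mu k *: gdrift p k y = 0.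
Variable N : nat.
Hypothesis HN : forall i j, 0 < Ppow P N i j.
Variable i0 : E.
Hypothesis pder : forall k u l x, derivable (fun y => p k y u) x (ebasis R l).
Variable M0 : R.
Hypothesis pD : forall k u l x, `|'D_(ebasis R l) (fun y => p k y u) x| <= M0.

Lemma p_lip k u l y t : `|p k (y + t *: ebasis R l) u - p k y u| <= M0 * `|t|.
Proof.
exact: (dir_lip (f := fun y => p k y u)).
Qed.

Lemma g_coord k y l : gdrift p k y 0 l = p k y (l, true) - p k y (l, false).
Proof. by rewrite /gdrift drift_coord. Qed.

Lemma h_coord k y l : hdrift p k y 0 l = qrefl p k y (l, true) - qrefl p k y (l, false).
Proof. by rewrite /hdrift drift_coord. Qed.

Lemma ppair_le1 k y l : p k y (l, true) + p k y (l, false) <= 1.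
Proof.
case: pk => p0 p1; rewrite -(p1 k y) sum_dir (bigD1 l) //= lerDl.
by apply: sumr_ge0 => l' _; apply: addr_ge0.
Qed.

Lemma g_bound k y l : `|gdrift p k y 0 l| <= 1.
Proof.
rewrite g_coord; apply: le_trans (ppair_le1 k y l).
case: pk => p0 _; have := p0 k y (l, true); have := p0 k y (l, false).
move=> h1 h2; rewrite ler_norml; apply/andP; split; lra.
Qed.

Lemma g_lip k y l l' t :
  `|gdrift p k (y + t *: ebasis R l') 0 l - gdrift p k y 0 l| <= 2 * M0 * `|t|.
Proof.
rewrite !g_coord.
have h1 := p_lip k (l, true) l' y t; have h2 := p_lip k (l, false) l' y t.
apply: le_trans (_ : `|p k (y + t *: ebasis R l') (l, true) - p k y (l, true)| +
   `|p k (y + t *: ebasis R l') (l, false) - p k y (l, false)| <= _).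
  set A := p k _ (l, true); set B := p k y (l, true).
  set C := p k _ (l, false); set D := p k y (l, false).
  have -> : A - C - (B - D) = (A - B) - (C - D) by ring.
  exact: ler_normB.
lra.
Qed.

Lemma gmean_coord y l : \sum_j mu j * gdrift p j y 0 l = 0.
Proof.
have h := congr1 (fun A : 'rV[R]_d => A 0 l) (gmean y).
move: h; rewrite /= summxE zero_coord => h.
transitivity (\sum_k (mu k *: gdrift p k y) 0 l); last exact: h.
by apply: eq_bigr => j _; rewrite mxE.
Qed.

Lemma coord_series i y l :
  (fun N0 => (\sum_(0 <= n < N0) \sum_j Ppow P n i j *: gdrift p j y) 0 l) =
   series (term P (fun j => gdrift p j y 0 l) i).
Proof.
apply: funext => n; rewrite /series /= summxE.
by apply: eq_bigr => k _; rewrite /term summxE; apply: eq_bigr => j _; rewrite mxE.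
Qed.

Lemma v_coord i y l :
  vcorr p P i y 0 l = limn (series (term P (fun j => gdrift p j y 0 l) i)).
Proof.
rewrite /vcorr limn_coord; first by rewrite coord_series.
move=> l'; rewrite coord_series.
apply: (cvg_term Pst muinv HN i0 (lam := 1)) => //.
- by move=> j; apply: g_bound.
- exact: gmean_coord.
Qed.

Lemma v_bound i y l : `|vcorr p P i y 0 l| <= K0 P N.
Proof.
rewrite v_coord -[K0 P N]mul1r.
apply: (lim_term_bound Pst muinv HN i0) => //.
- by move=> j; apply: g_bound.
- exact: gmean_coord.
Qed.

Lemma v_lip i y l l' t :
  `|vcorr p P i (y + t *: ebasis R l') 0 l - vcorr p P i y 0 l| <= K0 P N * (2 * M0 * `|t|).
Proof.
have M00 : 0 <= M0 by apply: le_trans (pD i0 (l, true) l 0); apply: normr_ge0.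
rewrite !v_coord.
set f1 := fun j => gdrift p j (y + t *: ebasis R l') 0 l.
set f2 := fun j => gdrift p j y 0 l.
have c1 : cvgn (series (term P f1 i)).
  apply: (cvg_term Pst muinv HN i0 (lam := 1)) => //.
  - by move=> j; apply: g_bound.
  - exact: gmean_coord.
have c2 : cvgn (series (term P f2 i)).
  apply: (cvg_term Pst muinv HN i0 (lam := 1)) => //.
  - by move=> j; apply: g_bound.
  - exact: gmean_coord.
rewrite -limB //.
have -> : (series (term P f1 i) - series (term P f2 i)) =
          series (term P (fun j => f1 j - f2 j) i).
  apply: funext => n; rewrite /series /= !fctE -sumrB; apply: eq_bigr => k _.
  by rewrite /term -sumrB; apply: eq_bigr => j _; rewrite mulrBr.
rewrite mulrC.
apply: (lim_term_bound Pst muinv HN i0).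
- by apply: mulr_ge0 => //; apply: mulr_ge0.
- by move=> j; rewrite /f1 /f2; apply: g_lip.
- rewrite /f1 /f2; under eq_bigr => j _ do rewrite mulrBr.
  by rewrite sumrB !gmean_coord subrr.
Qed.

Lemma q_ge0 k y u : 0 <= qrefl p k y u.
Proof.
case: pk => p0 _; rewrite /qrefl; case: ifP => _; [case: ifP => _|case: ifP => _].
all: try case: u.2; rewrite ?addr_ge0 //.
Qed.

Lemma q_sum k y : \sum_u qrefl p k y u = 1.
Proof.
case: pk => _ p1; rewrite -(p1 k y) !sum_dir; apply: eq_bigr => l _.
rewrite /qrefl /=; case: ifP => _; first by rewrite add0r.
by case: ifP => _ //; rewrite addr0.
Qed.

Lemma hg_coord k y l : (hdrift p k y - gdrift p k y) 0 l =
  if y 0 l == 1 then - (2 * p k y (l, true))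
  else if y 0 l == 0 then 2 * p k y (l, false) else 0.
Proof.
rewrite !mxE h_coord g_coord /qrefl /=.
case: ifP => _; first ring.
case: ifP => _; first ring.
ring.
Qed.

Definition Lc : R := 2 * M0 * (K0 P N + 1).

Lemma M0_ge0 (l : 'I_d) : 0 <= M0.
Proof. by apply: le_trans (pD i0 (l, true) l 0); apply: normr_ge0. Qed.

Lemma dvecE (u : dir d) : dvec R u = (if u.2 then 1 else -1) *: ebasis R u.1.
Proof. by rewrite /dvec; case: u.2; rewrite ?scale1r ?scaleN1r. Qed.

Lemma W_lip i y (m : nat) (u : dir d) l : (1 <= m)%N ->
  `|((vcorr p P i (y + (m%:R)^-1 *: dvec R u) - gdrift p i (y + (m%:R)^-1 *: dvec R u))
     - (vcorr p P i y - gdrift p i y)) 0 l| <= Lc / m%:R.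
Proof.
move=> m1.
have mpos : 0 < (m%:R : R) by rewrite ltr0n.
set s : R := (if u.2 then 1 else -1) * (m%:R)^-1.
have es : y + (m%:R)^-1 *: dvec R u = y + s *: ebasis R u.1.
  by rewrite dvecE scalerA /s mulrC.
have ns : `|s| = (m%:R)^-1.
  by rewrite /s normrM; case: u.2; rewrite ?normrN normr1 mul1r ger0_norm // invr_ge0 ltW.
rewrite es !mxE.
have h1 := v_lip i y l u.1 s; have h2 := g_lip i y l u.1 s.
rewrite ns in h1 h2.
have K00 := K0_ge0 HN i0.
have M00 := M0_ge0 u.1.
set A := vcorr p P i _ 0 l in h1 *; set B := vcorr p P i y 0 l in h1 *.
set C := gdrift p i _ 0 l in h2 *; set D := gdrift p i y 0 l in h2 *.
have -> : A + - C + - (B + - D) = (A - B) - (C - D) by ring.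
apply: le_trans (ler_normB _ _) _.
have -> : Lc / m%:R = K0 P N * (2 * M0 * (m%:R)^-1) + 2 * M0 * (m%:R)^-1.
  by rewrite /Lc; field; rewrite gt_eqF.
exact: lerD.
Qed.

Lemma c_bound i y (m : nat) l : (1 <= m)%N -> `|cm p P m i y 0 l| <= Lc / m%:R.
Proof.
move=> m1; rewrite /cm summxE.
apply: le_trans (ler_norm_sum _ _ _) _.
apply: le_trans (_ : \sum_u qrefl p i y u * (Lc / m%:R) <= _).
  apply: ler_sum => u _; rewrite mxE normrM ger0_norm ?q_ge0 //.
  by apply: ler_wpM2l; [apply: q_ge0 | apply: W_lip].
by rewrite -mulr_suml q_sum mul1r.
Qed.

End Bounds.


Section Traj.
Variables (R : realType) (d : nat) (E : finType) (P : E -> E -> R).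
Variable p : E -> 'rV[R]_d -> dir d -> R.
Hypothesis Pst : stochastic P.
Hypothesis pk : kernel_ok p.
Variables (m : nat) (xi : nat -> E) (Rw : nat -> 'rV[R]_d).
Hypothesis m1 : (1 <= m)%N.
Hypothesis adm : admissible p P m xi Rw.

Lemma mpos : 0 < (m%:R : R).
Proof. by rewrite ltr0n. Qed.

Lemma y_coord k l : ((m%:R)^-1 *: Rw k) 0 l = (m%:R)^-1 * Rw k 0 l.
Proof. by rewrite mxE. Qed.

Lemma yR1 k l : ((m%:R)^-1 *: Rw k) 0 l = 1 -> Rw k 0 l = m%:R.
Proof.
rewrite y_coord => /(congr1 (fun x => m%:R * x)).
by rewrite mulrA mulfV ?mul1r ?mulr1 // gt_eqF // mpos.
Qed.

Lemma yR0 k l : ((m%:R)^-1 *: Rw k) 0 l = 0 -> Rw k 0 l = 0.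
Proof.
rewrite y_coord => /eqP; rewrite mulf_eq0 invr_eq0 => /orP[|/eqP //].
by move=> h; have := mpos; rewrite lt_def h.
Qed.

Lemma range k l : exists r : nat, (r <= m)%N /\ Rw k 0 l = r%:R.
Proof.
case: adm => R0 step.
elim: k => [|k [r [rm hr]]].
  by exists 0%N; split => //; rewrite R0 zero_coord.
have [u [eR pos]] := step k.
have qn0 : qrefl p (xi k) ((m%:R)^-1 *: Rw k) u != 0.
  by apply/eqP => h; move: pos; rewrite h mulr0 ltxx.
rewrite eR mxE dvec_coord.
case: u qn0 {eR pos} => l0 b /= qn0.
have [el|nel] := eqP; last by exists r; rewrite addr0.
subst l0; move: qn0; rewrite /qrefl /=.
case: b => /=.
- case: ifP => [_|/negbT y1]; first by rewrite eqxx.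
  move=> _; exists r.+1; split; last by rewrite hr natr1.
  rewrite ltn_neqAle rm andbT; apply/eqP => rme; move: y1.
  by rewrite y_coord hr rme mulVf ?eqxx // gt_eqF // mpos.
- case: ifP => [y1 _|_].
    have rp : (0 < r)%N.
      rewrite lt0n; apply/eqP => r0; move: y1; rewrite y_coord hr r0 mulr0.
      by rewrite eq_sym oner_eq0.
    exists r.-1; split; first by rewrite (leq_trans (leq_pred r)).
    by rewrite hr -{1}(prednK rp) -natr1 addrK.
  case: ifP => [_|/negbT y0 _]; first by rewrite eqxx.
  have rp : (0 < r)%N.
    by rewrite lt0n; apply/eqP => r0; move: y0; rewrite y_coord hr r0 mulr0 eqxx.
  exists r.-1; split; first by rewrite (leq_trans (leq_pred r)).
  by rewrite hr -{1}(prednK rp) -natr1 addrK.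
Qed.

Lemma Rw_bounds k l : 0 <= Rw k 0 l <= m%:R.
Proof. by have [r [rm ->]] := range k l; rewrite ler0n ler_nat. Qed.

End Traj.

Section Main.
Variables (R : realType) (d : nat) (E : finType) (P : E -> E -> R) (mu : E -> R).
Variable p : E -> 'rV[R]_d -> dir d -> R.
Hypothesis Pst : stochastic P.
Hypothesis muinv : invariant_prob P mu.
Hypothesis pk : kernel_ok p.
Hypothesis gmean : forall y, \sum_(k : E) mu k *: gdrift p k y = 0.
Variable N : nat.
Hypothesis HN : forall i j, 0 < Ppow P N i j.
Variable i0 : E.
Hypothesis pder : forall k u l x, derivable (fun y => p k y u) x (ebasis R l).
Variable M0 : R.
Hypothesis pD : forall k u l x, `|'D_(ebasis R l) (fun y => p k y u) x| <= M0.
Variables (m : nat) (xi : nat -> E) (Rw : nat -> 'rV[R]_d).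
Hypothesis m1 : (1 <= m)%N.
Hypothesis adm : admissible p P m xi Rw.

Local Notation yy k := ((m%:R)^-1 *: Rw k).

Lemma bracket k n l :
  let w := (hdrift p (xi k) (yy k) - gdrift p (xi k) (yy k)) 0 l in
  (Rw k 0 l - Rw n 0 l) * w + (m%:R - Rw n 0 l) * Num.max (- w) 0
    + Rw n 0 l * Num.max w 0 = 0.
Proof.
rewrite /= hg_coord; case: pk => p0 _.
case: ifP => [/eqP y1|_].
  rewrite (yR1 m1 y1) opprK.
  have h := p0 (xi k) (yy k) (l, true).
  rewrite (@max_l _ _ (2 * _) 0) ?mulr_ge0 // (@max_r _ _ (- _) 0); last first.
    by rewrite oppr_le0 mulr_ge0.
  ring.
case: ifP => [/eqP y0|_].
  rewrite (yR0 m1 y0).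
  have h := p0 (xi k) (yy k) (l, false).
  rewrite (@max_l _ _ (2 * _) 0) ?mulr_ge0 // (@max_r _ _ (- _) 0); last first.
    by rewrite oppr_le0 mulr_ge0.
  ring.
rewrite oppr0 maxxx; ring.
Qed.

Definition vv k := vcorr p P (xi k) (yy k).
Definition hgv k := hdrift p (xi k) (yy k) - gdrift p (xi k) (yy k).
Definition Fk n k := \sum_(l < d) ((Rw k 0 l - Rw n 0 l) ^+ 2 + 2 * (Rw k 0 l - Rw n 0 l) * vv k 0 l).
Definition Gk n k := dotv (m%:R *: eall R d - Rw n) (negpart (hgv k)) + dotv (Rw n) (pospart (hgv k))
   - dotv (Rw k - Rw n) (Zinc p P m xi Rw k).
Definition C1 : R := d%:R * (1 + 2 * K0 P N + 2 * Lc P N M0).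

Lemma eall_coord l : eall R d 0 l = 1.
Proof.
rewrite /eall summxE (bigD1 l) //= big1 ?addr0 ?ebasis_coord ?eqxx //.
by move=> l' /negPf h; rewrite ebasis_coord h.
Qed.

Lemma step n k : Fk n k.+1 - Fk n k + 2 * Gk n k <= C1.
Proof.
rewrite /Fk /Gk /dotv -!sumrB -big_split /= -sumrB mulr_sumr -big_split /=.
have -> : C1 = \sum_(l < d) (1 + 2 * K0 P N + 2 * Lc P N M0).
  by rewrite sumr_const card_ord /C1 mulr_natl.
apply: ler_sum => l _.
rewrite /Zinc /= !mxE eall_coord mulr1.
have hb := bracket k n l; rewrite /= !mxE in hb.
case: (adm) => _ /(_ k) [u [eR _]].
have eR1 : Rw k.+1 0 l = Rw k 0 l + dvec R u 0 l by rewrite eR mxE.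
have hu : `|dvec R u 0 l| <= 1.
  by rewrite dvec_coord; case: ifP => _; [case: u.2; rewrite ?normrN normr1|rewrite normr0].
have hv := v_bound Pst muinv pk gmean HN i0 (xi k.+1) (yy k.+1) l.
have hc := c_bound Pst muinv pk gmean HN i0 pder pD (xi k) (yy k) l m1.
have K00 := K0_ge0 HN i0.
have mp := mpos R m1.
have /andP[rk0 rkm] := Rw_bounds m1 adm k l.
have /andP[rn0 rnm] := Rw_bounds m1 adm n l.
rewrite /vv; rewrite eR1.
set uu := dvec R u 0 l in hu *.
set v1 := vcorr p P _ _ 0 l in hv *.
set c := cm p P m _ _ 0 l in hc *.
set a := Rw k 0 l - Rw n 0 l.
set w := hdrift p _ _ 0 l - gdrift p _ _ 0 l in hb *.
set v0 := vcorr p P (xi k) _ 0 l.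
have ha : `|a| <= m%:R.
  rewrite ler_norml; apply/andP; split; rewrite /a; lra.
have h1 : uu ^+ 2 <= 1.
  rewrite -[uu ^+ 2]ger0_norm ?sqr_ge0 // normrX.
  by rewrite expr_le1.
have h2 : uu * v1 <= K0 P N.
  apply: le_trans (ler_norm _) _; rewrite normrM -[K0 P N]mul1r.
  by apply: ler_pM.
have h3 : a * c <= Lc P N M0.
  apply: le_trans (ler_norm _) _; rewrite normrM.
  apply: le_trans (_ : m%:R * (Lc P N M0 / m%:R) <= _).
    by apply: ler_pM.
  by rewrite mulrC divfK // gt_eqF.
clearbody w uu v1 c v0.
rewrite /a in hb h3 *.
lra.
Qed.

Lemma sqnormE n k : sqnorm (Rw k - Rw n) = \sum_(l < d) (Rw k 0 l - Rw n 0 l) ^+ 2.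
Proof. by rewrite /sqnorm /dotv; apply: eq_bigr => l _; rewrite !mxE expr2. Qed.

Lemma Fk_bound n k : `|Fk n k - sqnorm (Rw k - Rw n)| <= 2 * d%:R * m%:R * K0 P N.
Proof.
rewrite sqnormE /Fk -sumrB.
apply: le_trans (ler_norm_sum _ _ _) _.
have -> : 2 * d%:R * m%:R * K0 P N = \sum_(l < d) (2 * m%:R * K0 P N).
  by rewrite sumr_const card_ord -mulr_natl; ring.
apply: ler_sum => l _.
have /andP[rk0 rkm] := Rw_bounds m1 adm k l.
have /andP[rn0 rnm] := Rw_bounds m1 adm n l.
have hv := v_bound Pst muinv pk gmean HN i0 (xi k) (yy k) l.
rewrite /vv; set v := vcorr _ _ _ _ 0 l in hv *.
have -> : (Rw k 0 l - Rw n 0 l) ^+ 2 + 2 * (Rw k 0 l - Rw n 0 l) * v -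
   (Rw k 0 l - Rw n 0 l) ^+ 2 = 2 * ((Rw k 0 l - Rw n 0 l) * v) by ring.
rewrite normrM ger0_norm // -mulrA ler_pM2l // normrM.
apply: ler_pM => //.
rewrite ler_norml; apply/andP; split; lra.
Qed.

Hypothesis dpos : (0 < d)%N.

Lemma C1_ge0 : 0 <= C1.
Proof.
have M00 := M0_ge0 i0 pD (Ordinal dpos).
have K00 := K0_ge0 HN i0.
rewrite /C1 /Lc; apply: mulr_ge0 => //.
apply: addr_ge0; [apply: addr_ge0 => //; apply: mulr_ge0 => //|].
apply: mulr_ge0 => //; apply: mulr_ge0; [apply: mulr_ge0 => //|apply: addr_ge0 => //].
Qed.

Lemma main_ineq n p0 q : (p0 <= q)%N ->
  sqnorm (Rw q - Rw n)
   + 2 * (\sum_(p0 <= k < q) dotv (m%:R *: eall R d - Rw n) (negpart (hgv k)))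
   + 2 * (\sum_(p0 <= k < q) dotv (Rw n) (pospart (hgv k)))
  <= sqnorm (Rw p0 - Rw n) + (C1 + 4 * d%:R * K0 P N) * ((q - p0)%:R + m%:R)
   + 2 * (\sum_(p0 <= k < q) dotv (Rw k - Rw n) (Zinc p P m xi Rw k)).
Proof.
move=> pq.
have tele : \sum_(p0 <= k < q) (Fk n k.+1 - Fk n k + 2 * Gk n k) <=
            \sum_(p0 <= k < q) C1.
  by apply: ler_sum => k _; apply: step.
rewrite big_split /= telescope_sumr // -mulr_sumr sumr_const_nat in tele.
rewrite /Gk sumrB big_split /= in tele.
rewrite -[C1 *+ _]mulr_natl natrB // in tele.
have hq := Fk_bound n q; have hp := Fk_bound n p0.
have C10 := C1_ge0.
have K00 := K0_ge0 HN i0.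
have qp0 : 0 <= (q%:R - p0%:R : R) by rewrite subr_ge0 ler_nat.
have m0 : 0 <= (m%:R : R) by [].
have d0 : 0 <= (d%:R : R) by [].
rewrite natrB //.
have e1 : 0 <= C1 * m%:R by apply: mulr_ge0.
have e2 : 0 <= 4 * d%:R * K0 P N * (q%:R - p0%:R) by apply: mulr_ge0 => //; apply: mulr_ge0 => //; apply: mulr_ge0.
move: hq hp; rewrite !ler_norml => /andP[hq1 hq2] /andP[hp1 hp2].
lra.
Qed.

End Main.

Theorem lemma5p2 (R : realType) (d : nat) (E : finType)
    (P : E -> E -> R) (mu : E -> R) (p : E -> 'rV[R]_d -> dir d -> R) :
  (0 < d)%N ->
  stochastic P -> irreducible P -> aperiodic P -> invariant_prob P mu ->
  kernel_ok p ->
  (forall k u, C2_bounded (fun y => p k y u)) ->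
  (forall y, \sum_(k : E) mu k *: gdrift p k y = 0) ->
  exists C : R, forall (m : nat) (xi : nat -> E) (Rw : nat -> 'rV[R]_d)
                       (n p0 q : nat),
    (1 <= m)%N -> (1 <= n)%N -> (n <= p0)%N -> (p0 <= q)%N ->
    admissible p P m xi Rw ->
    let y k := (m%:R)^-1 *: Rw k in
    let hg k := hdrift p (xi k) (y k) - gdrift p (xi k) (y k) in
    sqnorm (Rw q - Rw n)
      + 2 * (\sum_(p0 <= k < q) dotv (m%:R *: eall R d - Rw n) (negpart (hg k)))
      + 2 * (\sum_(p0 <= k < q) dotv (Rw n) (pospart (hg k)))
    <= sqnorm (Rw p0 - Rw n) + C * ((q - p0)%:R + m%:R)
      + 2 * (\sum_(p0 <= k < q) dotv (Rw k - Rw n) (Zinc p P m xi Rw k)).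
Proof.
move=> dpos Pst Pirr Pap muinv pk pC2 gmean.
have [i0 _] : exists i : E, True.
  case: (boolP [exists i : E, true]) => [/existsP [i _]|h]; first by exists i.
  exfalso; case: muinv => _ [mu1 _].
  have : \sum_i mu i = 0.
    by apply: big1 => i _; exfalso; move/negP: h; apply; apply/existsP; exists i.
  by rewrite mu1 => /eqP; rewrite oner_eq0.
have [N HN] := uniform_pos Pst Pirr Pap.
have pder : forall k u l x, derivable (fun y => p k y u) x (ebasis R l).
  by move=> k u l x; case: (pC2 k u) => H _; apply: H.
have HM0 : forall ku : E * dir d, exists M : R, forall l x,
    `|'D_(ebasis R l) (fun y => p ku.1 y ku.2) x| <= M.
  move=> ku; case: (pC2 ku.1 ku.2) => _ [_ [_ [_ [M HM]]]].
  by exists M => l x; case: (HM l l x).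
have [Mf HM] := choice HM0.
pose M0 := \sum_(ku : E * dir d) `|Mf ku|.
have pD : forall k u l x, `|'D_(ebasis R l) (fun y => p k y u) x| <= M0.
  move=> k u l x; apply: le_trans (HM (k, u) l x) _.
  apply: le_trans (ler_norm _) _.
  rewrite /M0 (bigD1 (k, u)) //= lerDl; apply: sumr_ge0 => ? _; exact: normr_ge0.
exists (C1 d P N M0 + 4 * d%:R * K0 P N).
move=> m xi Rw n p0 q m1 n1 np pq adm.
exact: (main_ineq Pst muinv pk gmean HN i0 pder pD m1 adm dpos n pq).
Qed.
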